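(* For every $n\in\mathbb Z$, the vector field $S^{(n)}=\partial_{f_{1-n}}$ is given by $$S^{(n)}=\sum_{m\ge1}\Big((n+m)\varphi^{(n+m)}+\sum_{k=0}^{n+1}A_0^{(k,m)}A_2^{(-k-1,n)}\Big)\frac{\partial}{\partial\varphi^{(m)}},$$ where the inner sum is empty if $n+1<0$.
   Context: Let $\varphi^{(1)},\varphi^{(2)},\dots$ be independent variables, set $\varphi^{(-1)}=1$, $\varphi^{(0)}=0$ and $\varphi^{(j)}=0$ for $j\le-2$, and let $\varphi(\lambda)=\sum_{k\ge-1}\varphi^{(k)}\lambda^k=1/\lambda+\sum_{k\ge1}\varphi^{(k)}\lambda^k$, $\varphi'=d\varphi/d\lambda$. For integers $k$ (possibly negative) and $r\ge0$, $A_r^{(k,n)}=[\lambda^{n-r}](\varphi^k\varphi'^r)$ denotes the coefficient of $\lambda^{n-r}$ in the Laurent series $\varphi^k\varphi'^r$. Notation $\mathfrak P_\varphi$: with $w=1/\varphi(\lambda)=\lambda+O(\lambda^3)$, any Laurent series $F$ in $\lambda$ with finitely many negative powers is uniquely $F=\sum_{k\le m}c_k\varphi(\lambda)^k$ with $c_k$ independent of $\lambda$; $\mathfrak P_\varphi F=F-\sum_{k=0}^mc_k\varphi(\lambda)^k$ (a power series in $\lambda$ without constant term). $f_n=\mathfrak P_\varphi(\lambda^n\varphi')$. For $f=\sum_{i\ge1}f^{(i)}\lambda^i$, $\partial_f=\sum_{i\ge1}f^{(i)}\partial/\partial\varphi^{(i)}$. *)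

(* Defs.v *)
From HB Require Import structures.
From mathcomp Require Import all_boot all_order all_algebra.
Set Implicit Arguments. Unset Strict Implicit. Unset Printing Implicit Defensive.
Import Order.TTheory GRing.Theory Num.Theory.
Local Open Scope ring_scope.

(* Formal power series over a commutative ring R are
   coefficient functions nat -> R; Laurent series with finitely many negative
   powers are pairs (e, p) meaning lambda^e * p(lambda). *)

Section Series.
Variable R : comNzRingType.

Definition ps := nat -> R.
Definition ps1 : ps := fun i => (i == 0%N)%:R.
Definition psmul (p q : ps) : ps := fun i => \sum_(0 <= j < i.+1) p j * q (i - j)%N.
Definition psexp (p : ps) (n : nat) : ps := iter n (psmul p) ps1.
(* inverse of a power series with constant term 1: sum_j (1 - p)^j
   (exact coefficientwise since (1 - p) has no constant term). *)
Definition psinv1 (p : ps) : ps :=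
  fun i => \sum_(0 <= j < i.+1) psexp (fun k => ps1 k - p k) j i.

Record laurent := Laurent { lexp : int; lps : ps }.

Definition lcoef (F : laurent) (j : int) : R :=
  match (j - lexp F)%R with Posz i => lps F i | Negz _ => 0 end.

Definition lmonom (n : int) : laurent := Laurent n ps1.
Definition lone : laurent := lmonom 0.

Definition ladd (F G : laurent) : laurent :=
  let e := Num.min (lexp F) (lexp G) in
  Laurent e (fun i => lcoef F (e + i%:Z) + lcoef G (e + i%:Z)).
Definition lscale (c : R) (F : laurent) : laurent :=
  Laurent (lexp F) (fun i => c * lps F i).
Definition lsub (F G : laurent) : laurent := ladd F (lscale (-1) G).
Definition lmul (F G : laurent) : laurent :=
  Laurent (lexp F + lexp G) (psmul (lps F) (lps G)).
Definition lderiv (F : laurent) : laurent :=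
  Laurent (lexp F - 1) (fun i => (lexp F + i%:Z)%:~R * lps F i).
Definition lpown (F : laurent) (r : nat) : laurent := iter r (lmul F) lone.
(* inverse, valid for F = lambda^e * p with p(0) = 1 *)
Definition linv1 (F : laurent) : laurent := Laurent (- lexp F) (psinv1 (lps F)).
(* integer power, valid for F = lambda^e * p with p(0) = 1 *)
Definition lpowz (F : laurent) (k : int) : laurent :=
  match k with Posz r => lpown F r | Negz r => lpown (linv1 F) r.+1 end.

(* The variables: x j = phi^(j) for j >= 1 (x 0 is ignored). *)
Variable x : nat -> R.

Definition phic (k : int) : R :=
  if k == -1 then 1 else
  match k with Posz j => if (0 < j)%N then x j else 0 | Negz _ => 0 end.

(* phi(lambda) = sum_{k >= -1} phi^(k) lambda^k = lambda^{-1} (1 + ...) *)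
Definition phi : laurent := Laurent (-1) (fun i => phic (i%:Z - 1)).
Definition dphi : laurent := lderiv phi.

Definition Acoef (r : nat) (k n : int) : R :=
  lcoef (lmul (lpowz phi k) (lpown dphi r)) (n - r%:Z).

(* Projection P_phi: writing F = sum_{k <= m} c_k phi^k, the coefficients
   c_m, ..., c_0 are determined by successively removing the leading terms
   (phi^j = lambda^{-j} (1 + O(lambda^2))): c_j = [lambda^{-j}] of the current
   remainder.  P_phi F = F - sum_{k=0}^m c_k phi^k. *)
Fixpoint peel (F : laurent) (j : nat) : laurent :=
  let F' := lsub F (lscale (lcoef F (- j%:Z)) (lpown phi j)) in
  match j with 0%N => F' | j'.+1 => peel F' j' end.

Definition Pphi (F : laurent) : laurent :=
  peel F `|Num.min (0:int) (lexp F)|%N.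

Definition fser (n : int) : laurent := Pphi (lmul (lmonom n) dphi).

End Series.

(* Main.v *)
Require Import Defs.
From HB Require Import structures.
From mathcomp Require Import all_boot all_order all_algebra zify.
From Stdlib Require Import FunctionalExtensionality.
From mathcomp Require mpoly.
Import Order.TTheory GRing.Theory Num.Theory.
Set Implicit Arguments. Unset Strict Implicit. Unset Printing Implicit Defensive.
Local Open Scope ring_scope.

Section PS.
Variable R : comNzRingType.
Implicit Types p q r : ps R.

Definition Pt (i : nat) (p : ps R) : {poly R} := \poly_(j < i.+1) p j.

Lemma Pt_coef i p j : (j <= i)%N -> (Pt i p)`_j = p j.
Proof. by move=> h; rewrite /Pt coef_poly ltnS h. Qed.

Lemma psmul_poly p q i (A B : {poly R}) :
  (forall j, (j <= i)%N -> A`_j = p j) -> (forall j, (j <= i)%N -> B`_j = q j) ->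
  psmul p q i = (A * B)`_i.
Proof.
move=> hA hB; rewrite coefM /psmul big_mkord; apply: eq_bigr => j _.
by rewrite hA ?hB // ?leq_subr // -ltnS.
Qed.

Lemma psmul_Pt p q i j : (j <= i)%N -> psmul p q j = (Pt i p * Pt i q)`_j.
Proof.
move=> ji; apply: psmul_poly => k kj; apply: Pt_coef; exact: leq_trans kj ji.
Qed.

Lemma psmulC p q : psmul p q = psmul q p.
Proof.
apply: functional_extensionality => i.
by rewrite (psmul_Pt _ _ (leqnn i)) (psmul_Pt q p (leqnn i)) mulrC.
Qed.

Lemma psmulA p q r : psmul (psmul p q) r = psmul p (psmul q r).
Proof.
apply: functional_extensionality => i.
rewrite (@psmul_poly _ _ i (Pt i p * Pt i q) (Pt i r)); last 2 first.
- by move=> j ji; rewrite -psmul_Pt.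
- by move=> j ji; rewrite Pt_coef.
rewrite (@psmul_poly _ _ i (Pt i p) (Pt i q * Pt i r)); last 2 first.
- by move=> j ji; rewrite Pt_coef.
- by move=> j ji; rewrite -psmul_Pt.
by rewrite mulrA.
Qed.

Lemma Pt1 i : Pt i (ps1 R) = 1.
Proof.
apply/polyP => j; rewrite /Pt coef_poly coef1 /ps1.
by case: j => [|j] //=; case: ifP.
Qed.

Lemma psmul1 p : psmul (ps1 R) p = p.
Proof.
apply: functional_extensionality => i.
by rewrite (psmul_Pt _ _ (leqnn i)) Pt1 mul1r Pt_coef.
Qed.

Lemma psmul1r p : psmul p (ps1 R) = p.
Proof. by rewrite psmulC psmul1. Qed.

Lemma psmulZr p q (c : R) : psmul p (fun i => c * q i) = fun i => c * psmul p q i.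
Proof.
apply: functional_extensionality => i; rewrite /psmul mulr_sumr.
by apply: eq_bigr => j _; rewrite mulrCA.
Qed.

Lemma psmulDr p q r : psmul p (fun i => q i + r i) = fun i => psmul p q i + psmul p r i.
Proof.
apply: functional_extensionality => i; rewrite /psmul -big_split /=.
by apply: eq_bigr => j _; rewrite mulrDr.
Qed.

Lemma psexp_Pt u j i k : (k <= i)%N -> psexp u j k = ((Pt i u) ^+ j)`_k.
Proof.
elim: j k => [|j IH] k ki.
  by rewrite expr0 coef1 /psexp /= /ps1; case: (k == 0%N).
rewrite exprS /psexp iterS -/(psexp u j).
apply: psmul_poly => l lk; first by rewrite Pt_coef // (leq_trans lk ki).
by rewrite IH // (leq_trans lk ki).
Qed.

Lemma psinv1P p : p 0%N = 1 -> psmul p (psinv1 p) = ps1 R.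
Proof.
move=> p0; apply: functional_extensionality => i.
set u := (fun k => ps1 R k - p k).
set U := Pt i u.
have U0 : U`_0 = 0 by rewrite Pt_coef // /u p0 subrr.
have Uj : forall j k, (k < j)%N -> (U ^+ j)`_k = 0.
  elim=> [|j IH] k // kj; rewrite exprS coefM big1 // => [[l /=]] lk _.
  case: l lk => [|l] lk; first by rewrite U0 mul0r.
  rewrite IH ?mulr0 //; rewrite ltnS in lk kj; lia.
have Pp : Pt i p = 1 - U.
  apply/polyP => k; rewrite coefB coef1 /U /Pt !coef_poly /u /ps1.
  case: ltnP => h; first by rewrite opprB addrC subrK.
  by case: k h => [|k] h //; rewrite subr0.
rewrite (@psmul_poly _ _ i (Pt i p) (\sum_(j < i.+1) U ^+ j)); last 2 first.
- by move=> j ji; rewrite Pt_coef.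
- move=> k ki; rewrite /psinv1 coef_sum -(big_mkord xpredT (fun j => (U ^+ j)`_k)).
  rewrite (@big_cat_nat _ _ _ k.+1) //=.
  rewrite [X in _ + X]big_nat_cond [X in _ + X]big1 ?addr0; last first.
    by move=> j /andP[/andP[kj _] _]; rewrite Uj.
  by apply: eq_big_nat => j /andP[_ jk]; rewrite -psexp_Pt.
have tele : forall n, (1 - U) * \sum_(j < n) U ^+ j = 1 - U ^+ n.
  elim=> [|n IH]; first by rewrite big_ord0 mulr0 expr0 subrr.
  by rewrite big_ord_recr /= mulrDr IH mulrBl mul1r -exprS addrA subrK.
by rewrite Pp tele coefB coef1 Uj // subr0 /ps1; case: (i == 0%N).
Qed.

End PS.
Section Lau.
Variable R : comNzRingType.
Implicit Types F G H : laurent R.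

Lemma lcoef_lt F u : u < lexp F -> lcoef F u = 0.
Proof. by rewrite /lcoef; case E: (u - lexp F) => [i|i] // h; lia. Qed.

Lemma lcoef_add F (t : nat) : lcoef F (lexp F + t%:Z) = lps F t.
Proof. by rewrite /lcoef addrAC subrr add0r. Qed.

Lemma lcoefE F u : lcoef F u = if lexp F <= u then lps F `|u - lexp F|%N else 0.
Proof. rewrite /lcoef; case E: (u - lexp F) => [i|i] /=; case: ifP => // h; lia. Qed.

Lemma lcoef_ladd F G u : lcoef (ladd F G) u = lcoef F u + lcoef G u.
Proof.
rewrite /ladd {1}/lcoef /=; case E: (u - _) => [i|i].
  by have -> : Num.min (lexp F) (lexp G) + i%:Z = u by lia.
rewrite !lcoef_lt ?addr0 //.
  have := ge_min (lexp F) (lexp G) u; rewrite !leNgt; case: (ltP u (lexp G)) => //; lia.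
have := ge_min (lexp F) (lexp G) u; rewrite !leNgt; case: (ltP u (lexp F)) => //; lia.
Qed.

Lemma lcoef_lscale c F u : lcoef (lscale c F) u = c * lcoef F u.
Proof. by rewrite /lcoef /=; case: (u - lexp F) => [i|i]; rewrite ?mulr0. Qed.

Lemma lcoef_lsub F G u : lcoef (lsub F G) u = lcoef F u - lcoef G u.
Proof. by rewrite /lsub lcoef_ladd lcoef_lscale mulN1r. Qed.

Lemma lmulC F G : lmul F G = lmul G F.
Proof. by rewrite /lmul addrC psmulC. Qed.

Lemma lmulA F G H : lmul (lmul F G) H = lmul F (lmul G H).
Proof. by rewrite /lmul /= addrA psmulA. Qed.

Lemma lmul1 F : lmul (lone R) F = F.
Proof. by case: F => e p; rewrite /lmul /lone /lmonom /= add0r psmul1. Qed.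

Lemma lmulr1 F : lmul F (lone R) = F.
Proof. by rewrite lmulC lmul1. Qed.

Lemma lpownS F j : lpown F j.+1 = lmul F (lpown F j).
Proof. by []. Qed.

Lemma lpownD F i j : lpown F (i + j) = lmul (lpown F i) (lpown F j).
Proof.
elim: i => [|i IH]; first by rewrite add0n /lpown /= lmul1.
by rewrite addSn !lpownS IH lmulA.
Qed.

Lemma lexp_lpown F j : lexp (lpown F j) = j%:Z * lexp F.
Proof.
elim: j => [|j IH]; first by rewrite mul0r.
by rewrite lpownS /= IH -[j.+1]addn1 PoszD mulrDl mul1r addrC.
Qed.

Lemma lps_lpown F j : lps (lpown F j) = psexp (lps F) j.
Proof. by elim: j => [|j IH] //; rewrite lpownS /= IH. Qed.

Lemma lcoef_lmonom_mul s F u : lcoef (lmul (lmonom R s) F) u = lcoef F (u - s).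
Proof.
rewrite /lmul /lmonom /= psmul1 /lcoef /=.
by have -> : u - (s + lexp F) = u - s - lexp F by lia.
Qed.

Lemma lcoef_lderiv F u : lcoef (lderiv F) u = (u + 1)%:~R * lcoef F (u + 1).
Proof.
rewrite /lcoef /=; have -> : u - (lexp F - 1) = u + 1 - lexp F by lia.
case E: (u + 1 - lexp F) => [i|i]; rewrite ?mulr0 //.
by have -> : lexp F + i%:Z = u + 1 by lia.
Qed.

Variable x : nat -> R.

Lemma lcoef_phi u : lcoef (phi x) u = phic x u.
Proof.
rewrite /lcoef /phi /=; case E: (u + 1) => [i|i]; rewrite ?opprK ?E.
  by congr phic; lia.
rewrite /phic; case: ifP => [/eqP h|_]; first lia.
by case: u E => // k; lia.
Qed.

Lemma lcoef_dphi u : lcoef (dphi x) u = (u + 1)%:~R * phic x (u + 1).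
Proof. by rewrite /dphi lcoef_lderiv lcoef_phi. Qed.

Lemma lexp_phi : lexp (phi x) = -1. Proof. by []. Qed.

Lemma phi0 : lps (phi x) 0 = 1. Proof. by []. Qed.

Definition iota := linv1 (phi x).

Lemma iota_phi : lmul iota (phi x) = lone R.
Proof.
rewrite /lmul /iota /linv1 /= psmulC psinv1P //.
Qed.

End Lau.

Section Conv.
Variable R : comNzRingType.

Definition conv (f g : int -> R) (a b e : int) : R :=
  if a + b <= e then \sum_(t < (absz (e - a - b)%R).+1) f (a + t%:Z) * g (e - (a + t%:Z)) else 0.

Lemma lcoef_lmul (F G : laurent R) e :
  lcoef (lmul F G) e = conv (lcoef F) (lcoef G) (lexp F) (lexp G) e.
Proof.
rewrite lcoefE /= /conv; case: ifP => // h.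
have -> : e - (lexp F + lexp G) = e - lexp F - lexp G by lia.
rewrite /psmul big_mkord; apply: eq_bigr => [[t /= ht]] _.
rewrite lcoef_add lcoefE ifT; last by lia.
congr (_ * lps G _); lia.
Qed.

Lemma conv_lower f g a b (p q : nat) e :
  (forall u, u < a + p%:Z -> f u = 0) -> (forall v, v < b + q%:Z -> g v = 0) ->
  conv f g a b e = conv f g (a + p%:Z) (b + q%:Z) e.
Proof.
move=> hf hg; rewrite /conv; case: ifP => h1; case: ifP => h2; last by [].
- set N := absz (e - (a + p%:Z) - (b + q%:Z))%R.
  have -> : (absz (e - a - b)%R).+1 = (p + (N.+1 + q))%N by lia.
  rewrite big_split_ord /= big1 ?add0r; last first.
    by move=> [t /= ht] _; rewrite hf ?mul0r //; lia.
  rewrite big_split_ord /= [X in _ + X]big1 ?addr0; last first.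
    by move=> [t /= ht] _; rewrite hg ?mulr0 //; lia.
  apply: eq_bigr => [[s /= hs]] _.
  by have -> : a + (p + s)%:Z = a + p%:Z + s%:Z by lia.
- rewrite big1 // => [[t /= ht]] _.
  case: (ltnP t p) => tp; first by rewrite hf ?mul0r //; lia.
  rewrite hg ?mulr0 //; lia.
- lia.
Qed.

Lemma conv_lowerL f g a' a b e : a' <= a ->
  (forall u, u < a -> f u = 0) -> (forall v, v < b -> g v = 0) ->
  conv f g a' b e = conv f g a b e.
Proof.
move=> ha hf hg.
rewrite (@conv_lower f g a' b (absz (a - a')%R) 0%N e).
- by rewrite addr0; congr conv; lia.
- by move=> u hu; apply: hf; lia.
- by move=> v hv; apply: hg; lia.
Qed.

Lemma conv_lowerR f g a b' b e : b' <= b ->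
  (forall u, u < a -> f u = 0) -> (forall v, v < b -> g v = 0) ->
  conv f g a b' e = conv f g a b e.
Proof.
move=> ha hf hg.
rewrite (@conv_lower f g a b' 0%N (absz (b - b')%R) e).
- by rewrite addr0; congr conv; lia.
- by move=> u hu; apply: hf; lia.
- by move=> v hv; apply: hg; lia.
Qed.

Lemma conv_neg f g a b e : e < a + b -> conv f g a b e = 0.
Proof. by rewrite /conv => h; rewrite ifF //; lia. Qed.

Lemma conv_lin f (h : nat -> int -> R) (d : nat -> R) M g a b e :
  conv (fun u => f u - \sum_(j < M) d j * h j u) g a b e =
  conv f g a b e - \sum_(j < M) d j * conv (h j) g a b e.
Proof.
rewrite /conv; case: ifP => _; last by rewrite big1 ?subr0 // => j _; rewrite mulr0.
under eq_bigr do rewrite mulrBl mulr_suml.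
rewrite sumrB; congr (_ - _); rewrite exchange_big; apply: eq_bigr => j _.
by rewrite mulr_sumr; apply: eq_bigr => t _; rewrite mulrA.
Qed.

End Conv.

Section Tor.
Variable R : comNzRingType.

Definition Pp (x : nat -> R) : ps R := fun i => phic x (i%:Z - 1).
Definition Dp (x : nat -> R) : ps R := fun i => ((-1) + i%:Z)%:~R * Pp x i.
Definition TorPS (x : nat -> R) (a : nat) : R := psmul (psexp (Pp x) a) (Dp x) a.+1.
Definition delta (t : int) (q : ps R) : ps R := fun i => (t + i%:Z)%:~R * q i.

Lemma Tor_lcoef x a : lcoef (lmul (lpown (phi x) a) (dphi x)) (-1) = TorPS x a.
Proof.
rewrite lcoefE /= lexp_lpown /= ifT; last by lia.
have -> : absz (-1 - (a%:Z * -1 + (-1 - 1)))%R = a.+1 by lia.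
by rewrite lps_lpown.
Qed.

Lemma delta_mul t1 t2 q r :
  delta (t1 + t2) (psmul q r) = fun i => psmul (delta t1 q) r i + psmul q (delta t2 r) i.
Proof.
apply: functional_extensionality => i; rewrite /delta /psmul mulr_sumr -big_split /=.
apply: eq_big_nat => j /andP[_ hj].
rewrite mulrA mulrCA mulrA -mulrDl; congr (_ * _).
rewrite -mulrDl -intrD; congr (_ %:~R * _); lia.
Qed.

Lemma delta_psexp x n :
  delta ((n.+1)%:Z * -1) (psexp (Pp x) n.+1) = fun i => (n.+1)%:R * psmul (psexp (Pp x) n) (Dp x) i.
Proof.
elim: n => [|n IH].
  apply: functional_extensionality => i.
  by rewrite /psexp /= psmul1r psmul1 /delta /Dp mulr1n mul1r.
have -> : (n.+2)%:Z * -1 = -1 + (n.+1)%:Z * -1 by lia.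
rewrite {1}/psexp iterS -/(psexp (Pp x) n.+1) delta_mul IH psmulZr.
apply: functional_extensionality => i.
rewrite -psmulA [psmul (Pp x) (psexp (Pp x) n)]/(psexp (Pp x) n.+1).
have -> : delta (-1) (Pp x) = Dp x by [].
rewrite psmulC [in RHS]mulrS mulrDl mul1r; done.
Qed.

Lemma Tor_tors x a : (a.+1)%:R * TorPS x a = 0.
Proof.
have := congr1 (fun q => q a.+1) (delta_psexp x a); rewrite /delta /= => <-.
have -> : (a.+1)%:Z * -1 + (a.+1)%:Z = 0 by lia.
by rewrite mul0r.
Qed.

Lemma phic_local (x x' : nat -> R) K i : (forall j, (j < K)%N -> x j = x' j) ->
  (i <= K)%N -> phic x (i%:Z - 1) = phic x' (i%:Z - 1).
Proof.
move=> hx hi; rewrite /phic; case: ifP => // _.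
case E: (i%:Z - 1) => [j|j] //; case: ifP => // _; apply: hx; lia.
Qed.

Lemma psmul_local (p q p' q' : ps R) K i : (forall j, (j <= K)%N -> p j = p' j) ->
  (forall j, (j <= K)%N -> q j = q' j) -> (i <= K)%N -> psmul p q i = psmul p' q' i.
Proof.
move=> hp hq hi; rewrite /psmul; apply: eq_big_nat => j /andP[_ hj].
rewrite hp ?hq //; lia.
Qed.

Lemma psexp_local (p p' : ps R) K n i : (forall j, (j <= K)%N -> p j = p' j) ->
  (i <= K)%N -> psexp p n i = psexp p' n i.
Proof.
move=> hp; elim: n i => [|n IH] i hi //.
rewrite /psexp !iterS -!/(psexp _ n); apply: (psmul_local (K:=K)) => // j hj; exact: IH.
Qed.

Lemma Tor_local (x x' : nat -> R) a : (forall j, (j < a.+1)%N -> x j = x' j) ->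
  TorPS x a = TorPS x' a.
Proof.
move=> hx; have hP : forall j, (j <= a.+1)%N -> Pp x j = Pp x' j.
  by move=> j hj; exact: (phic_local (K:=a.+1)).
rewrite /TorPS; apply: (psmul_local (K:=a.+1)) => // j hj.
  exact: (psexp_local (K:=a.+1)).
by rewrite /Dp hP.
Qed.

End Tor.

Section TorMap.
Variables (T R : comNzRingType) (f : {rmorphism T -> R}).

Lemma map_psmul p q i : f (psmul p q i) = psmul (fun k => f (p k)) (fun k => f (q k)) i.
Proof. by rewrite /psmul rmorph_sum; apply: eq_bigr => j _; rewrite rmorphM. Qed.

Lemma map_psexp p n : (fun k => f (psexp p n k)) = psexp (fun k => f (p k)) n.
Proof.
elim: n => [|n IH]; apply: functional_extensionality => i.
  by rewrite /psexp /= /ps1; case: (i == 0%N); rewrite ?rmorph1 ?rmorph0.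
by rewrite /psexp !iterS -!/(psexp _ n) map_psmul IH.
Qed.

Lemma map_Pp (y : nat -> T) : (fun k => f (Pp y k)) = Pp (fun j => f (y j)).
Proof.
apply: functional_extensionality => i; rewrite /Pp /phic.
case: ifP; rewrite ?rmorph1 // => _.
by case: (i%:Z - 1) => [j|j]; rewrite ?rmorph0 //; case: ifP; rewrite ?rmorph0.
Qed.

Lemma map_Tor (y : nat -> T) a : f (TorPS y a) = TorPS (fun j => f (y j)) a.
Proof.
rewrite /TorPS map_psmul map_psexp map_Pp; congr psmul.
apply: functional_extensionality => i.
by rewrite /Dp rmorphM rmorph_int -map_Pp.
Qed.

End TorMap.

Module TorM.
Import mpoly.
Lemma Tor_zero (R : comNzRingType) (x : nat -> R) a : TorPS x a = 0.
Proof.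
pose y : nat -> {mpoly int[a.+1]} := fun j => if (j < a.+1)%N then 'X_(inord j) else 0.
pose h : 'I_a.+1 -> R := fun i => x i.
pose f : {rmorphism {mpoly int[a.+1]} -> R} := mmap (intmul (1:R)) h.
have fy : forall j, (j < a.+1)%N -> f (y j) = x j.
  by move=> j hj; rewrite /y hj /f /= mmapX mmap1U /h inordK.
have T0 : TorPS y a = 0.
  have H := Tor_tors y a; apply/mpolyP => m; have := congr1 (mcoeff m) H.
  rewrite mulr_natl mcoeffMn mcoeff0 => /eqP; rewrite mulrn_eq0 /= => /eqP ->.
  by [].
rewrite (Tor_local (x' := fun j => f (y j))); first by rewrite -map_Tor T0 rmorph0.
by move=> j hj; rewrite fy.
Qed.
End TorM.

Section Main.
Variable R : comNzRingType.
Variable x : nat -> R.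
Local Notation Phi := (phi x).

Lemma lcoef_lone u : lcoef (lone R) u = (u == 0)%:R.
Proof. by rewrite /lcoef /= subr0; case: u => [[|k]|k]. Qed.

Lemma lexp_powphi j : lexp (lpown Phi j) = - j%:Z.
Proof. by rewrite lexp_lpown lexp_phi mulrN1. Qed.

Lemma powphi_lt j u : u < - j%:Z -> lcoef (lpown Phi j) u = 0.
Proof. by move=> h; rewrite lcoef_lt // lexp_powphi. Qed.

Lemma psexp0 (p : ps R) n : p 0%N = 1 -> psexp p n 0 = 1.
Proof.
move=> p0; elim: n => [|n IH] //.
by rewrite /psexp iterS -/(psexp p n) /psmul big_nat1 p0 IH mul1r.
Qed.

Lemma powphi_lead j : lcoef (lpown Phi j) (- j%:Z) = 1.
Proof.
have := lcoef_add (lpown Phi j) 0; rewrite lexp_powphi addr0 => ->.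
by rewrite lps_lpown psexp0.
Qed.

Lemma Res_tor a : lcoef (lmul (lpown Phi a) (dphi x)) (-1) = 0.
Proof. by rewrite Tor_lcoef TorM.Tor_zero. Qed.

Lemma lexp_powiota l : lexp (lpown (iota x) l) = l%:Z.
Proof. by rewrite lexp_lpown mulr1. Qed.

Lemma lpown0 (F : laurent R) : lpown F 0 = lone R.
Proof. by []. Qed.

Lemma powphi_iota j l : lmul (lpown Phi j) (lpown (iota x) l) =
  if (l <= j)%N then lpown Phi (j - l) else lpown (iota x) (l - j).
Proof.
elim: j l => [|j IH] [|l].
- by rewrite lpown0 lmul1.
- by rewrite lpown0 lmul1 subn0.
- by rewrite lpown0 lmulr1 subn0.
rewrite !lpownS lmulA -(lmulA (lpown Phi j)) (lmulC (lpown Phi j) (iota x)).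
rewrite lmulA -lmulA (lmulC Phi) iota_phi lmul1 IH ltnS subSS subSS //.
Qed.

Lemma Res_iota : lcoef (lmul (iota x) (dphi x)) (-1) = -1.
Proof.
rewrite lcoefE /= /psmul /= big_nat1 /psinv1 /= big_nat1 /=.
have -> : (((0 + 0).+1 - 1).+1 - 1 - 0)%N = 0%N by [].
by rewrite /ps1 /= mul1r /phic /= mulN1r.
Qed.

Lemma Res_orth j k :
  lcoef (lmul (lpown Phi j) (lmul (lpown (iota x) k.+1) (dphi x))) (-1) =
  if j == k then -1 else 0.
Proof.
rewrite -lmulA powphi_iota; case: ifP => hkj.
  by rewrite Res_tor ifF //; apply/negbTE/eqP; lia.
case: (eqVneq j k) => [->|hjk].
  by rewrite subSnn lpownS lpown0 lmulr1 Res_iota.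
rewrite lcoef_lt //= lexp_powiota; lia.
Qed.

End Main.

Section Peel.
Variable R : comNzRingType.
Variable x : nat -> R.
Local Notation Phi := (phi x).

Lemma peelP (F : laurent R) J : exists d : nat -> R,
  (forall u, lcoef (peel x F J) u = lcoef F u - \sum_(j < J.+1) d j * lcoef (lpown Phi j) u) /\
  ((forall u, u < - J%:Z -> lcoef F u = 0) -> forall u, u <= 0 -> lcoef (peel x F J) u = 0).
Proof.
elim: J F => [|J IH] F.
  exists (fun _ => lcoef F (- 0%:Z)); split.
    by move=> u; rewrite /= lcoef_lsub lcoef_lscale big_ord1.
  move=> hF u hu; rewrite /= lcoef_lsub lcoef_lscale.
  have [hlt|->] : u < 0 \/ u = 0 by lia.
    by rewrite hF // lcoef_lone (_ : (u == 0) = false) ?mulr0 ?subr0 //; lia.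
  by rewrite lcoef_lone eqxx mulr1 subrr.
set c := lcoef F (- (J.+1)%:Z).
set F' := lsub F (lscale c (lpown Phi J.+1)).
have -> : peel x F J.+1 = peel x F' J by [].
have [d [H1 H2]] := IH F'.
exists (fun j => if j == J.+1 then c else d j); split.
  move=> u; rewrite H1 lcoef_lsub lcoef_lscale [in RHS]big_ord_recr /= eqxx.
  rewrite [in RHS](eq_bigr (fun j : 'I_J.+1 => d j * lcoef (lpown Phi j) u)); last first.
    by move=> [j /= hj] _; rewrite (_ : (j == J.+1) = false) //; lia.
  by rewrite -?lpownS opprD addrA addrAC.
move=> hF; apply: H2 => u hu; rewrite lcoef_lsub lcoef_lscale.
have [hlt|->] : u < - (J.+1)%:Z \/ u = - (J.+1)%:Z by lia.
  by rewrite hF // powphi_lt // mulr0 subr0.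
by rewrite powphi_lead mulr1 subrr.
Qed.

End Peel.

Theorem mainTheorem15 (R : comNzRingType) (x : nat -> R) (n : int) (m : nat) :
  (0 < m)%N ->
  lcoef (fser x (1 - n)) m%:Z =
    (n + m%:Z)%:~R * phic x (n + m%:Z) +
    (if (0 <= n + 1) then
       \sum_(0 <= k < absz (n + 2)) Acoef x 0 k%:Z m%:Z * Acoef x 2 (- k%:Z - 1) n
     else 0).
Proof.
move=> hm.
set F := lmul (lmonom R (1 - n)) (dphi x).
have FE : forall u, lcoef F u = (u + n)%:~R * phic x (u + n).
  move=> u; rewrite lcoef_lmonom_mul lcoef_dphi.
  by have -> : u - (1 - n) + 1 = u + n by lia.
have lexpF : lexp F = -1 - n by rewrite /F /= ; lia.
have -> : fser x (1 - n) = peel x F (absz (Num.min 0 (lexp F))) by [].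
case: ifP => hn.
- set J := absz (n + 1).
  have hJ : J%:Z = n + 1 by rewrite /J; lia.
  have -> : absz (Num.min 0 (lexp F)) = J.
    rewrite lexpF; have -> : Num.min 0 (-1 - n) = -1 - n.
      by apply/min_idPr; lia.
    rewrite /J; lia.
  have [d [H1 H2]] := peelP x F J.
  have hH : forall u, u <= 0 -> lcoef (peel x F J) u = 0.
    by apply: H2 => u hu; rewrite lcoef_lt // lexpF; lia.
  have dk : forall k, (k < J.+1)%N -> d k = - Acoef x 2 (- k%:Z - 1) n.
    move=> k hk.
    set K := lmul (lpown (iota x) k.+1) (dphi x).
    have lexpK : lexp K = k%:Z - 1 by rewrite /K /= lexp_powiota; lia.
    have c0 : conv (lcoef (peel x F J)) (lcoef K) (- J%:Z) (lexp K) (-1) = 0.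
      rewrite (@conv_lowerL _ _ _ _ 1); first by rewrite conv_neg // lexpK; lia.
      - lia.
      - by move=> u hu; apply: hH; lia.
      - by move=> v hv; rewrite lcoef_lt.
    move: c0; have -> : lcoef (peel x F J) = fun u => lcoef F u - \sum_(j < J.+1) d j * lcoef (lpown (phi x) j) u.
      by apply: functional_extensionality => u; rewrite H1.
    rewrite (conv_lin (lcoef F) (fun j => lcoef (lpown (phi x) j))).
    have -> : conv (lcoef F) (lcoef K) (- J%:Z) (lexp K) (-1) = Acoef x 2 (- k%:Z - 1) n.
      have -> : - J%:Z = lexp F by rewrite lexpF; lia.
      rewrite -lcoef_lmul /Acoef.
      have -> : lpowz (phi x) (- k%:Z - 1) = lpown (iota x) k.+1.
        by have -> : - k%:Z - 1 = Negz k by rewrite NegzE; lia.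
      have -> : lpown (dphi x) 2 = lmul (dphi x) (dphi x).
        by rewrite [LHS]/lpown /= lmulr1.
      rewrite /F /K lmulA.
      rewrite -(lmulA (dphi x)) (lmulC (dphi x) (lpown _ _)) lmulA.
      rewrite lcoef_lmonom_mul; congr lcoef; lia.
    rewrite (eq_bigr (fun j : 'I_J.+1 => d j * (if (j : nat) == k then -1 else 0))); last first.
      move=> [j /= hj] _; congr (_ * _).
      rewrite (@conv_lowerL _ _ _ _ (- j%:Z)).
      + by rewrite -(lexp_powphi x j) -lcoef_lmul Res_orth.
      + lia.
      + by move=> u hu; rewrite powphi_lt.
      + by move=> v hv; rewrite lcoef_lt.
    rewrite (bigD1 (Ordinal hk)) //= eqxx big1 ?addr0; last first.
      by move=> [j /= hj] hne; rewrite ifF ?mulr0 //; apply/negbTE; rewrite -(inj_eq val_inj) /= in hne.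
    by move=> /eqP; rewrite mulrN1 opprK addrC addr_eq0 => /eqP.
  rewrite H1 FE.
  have -> : absz (n + 2)%R = J.+1 by rewrite /J; lia.
  rewrite big_mkord (addrC m%:Z n); congr (_ + _).
  rewrite -sumrN; apply: eq_bigr => [[j hj]] _ /=.
  rewrite dk // /Acoef /= !lmulr1 mulNr opprK mulrC; congr (_ * _); congr lcoef; lia.
- have -> : Num.min 0 (lexp F) = 0.
    by rewrite lexpF; apply/min_idPl; lia.
  have [d [H1 _]] := peelP x F 0.
  rewrite /= H1 big_ord1 lpown0 lcoef_lone FE (_ : (m%:Z == 0) = false); last by lia.
  by rewrite mulr0 subr0 addr0 addrC.
Qed.
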